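(* Let $\xi\in\mathbb{R}\setminus\{0\}$ and for $\psi\in H_0^2((-1,1))$ let $E_0(\psi)=\frac12\int_{-1}^1|B|^2\big(|\psi'|^2+\frac{|\psi''|^2}{\xi^2}\big)dx_2-\frac12g[\rho]\psi(0)^2$. Then: (i) if $|B|\ge|B|_c$, then $E_0(\psi)\ge0$ for every $\psi\in H_0^2((-1,1))$, and moreover $E_0(\psi)\ge\frac12\int_{-1}^1\big((|B|^2-|B|_c^2)|\psi'|^2+\frac{|B|^2|\psi''|^2}{\xi^2}\big)dx_2$; (ii) if $|B|<|B|_c$ and $|\xi|\le|\xi|^B_{vc}$, then $E_0(\psi)\ge0$ for every $\psi\in H_0^2((-1,1))$; (iii) if $|B|<|B|_c$ and $|\xi|>|\xi|^B_{vc}$, then there exists $\psi\in H_0^2((-1,1))$ with $E_0(\psi)<0$; (iv) if there is $\psi\in H_0^2((-1,1))$ with $E_0(\psi)<0$, then $|B|<|B|_c$, $|\xi|>|\xi|^B_{vc}$ and $\psi(0)\ne0$.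
   Context: $g>0$, $[\rho]>0$, $B\ne0$ constants. $|B|_c^2:=\sup\{g[\rho]\psi(0)^2/\int_{-1}^1|\psi'|^2dx_2: 0\ne\psi\in H_0^1((-1,1))\}$; for $|B|<|B|_c$, $(|\xi|^B_{vc})^2:=\inf\{|B|^2\int_{-1}^1|\psi''|^2dx_2/(g[\rho]\psi(0)^2-|B|^2\int_{-1}^1|\psi'|^2dx_2):\psi\in H_0^2((-1,1)),\ g[\rho]\psi(0)^2-|B|^2\int_{-1}^1|\psi'|^2dx_2>0\}$. *)

(* Defs.v *)
From HB Require Import structures.
From mathcomp Require Import all_boot all_order all_algebra.
From mathcomp Require Import all_classical all_reals all_analysis.
Set Implicit Arguments. Unset Strict Implicit. Unset Printing Implicit Defensive.
Import Order.TTheory GRing.Theory Num.Theory.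
Import numFieldNormedType.Exports.
Local Open Scope classical_set_scope.
Local Open Scope ring_scope.

Section Defs.
Variable R : realType.
Local Notation leb := (@lebesgue_measure R).

Definition I11 : set R := `[-1, 1].

Definition L2 (f : R -> R) : Prop :=
  measurable_fun I11 f /\ leb.-integrable I11 (fun x => (f x ^+ 2)%:E).

(* f(x) = int_{-1}^x df for all x in [-1,1], with df integrable on [-1,1]:
   f is absolutely continuous on [-1,1], f(-1) = 0, and f' = df a.e. *)
Definition primitive (f df : R -> R) : Prop :=
  leb.-integrable I11 (EFin \o df) /\
  forall x, -1 <= x <= 1 -> f x = Rintegral leb `[-1, x] df.

Definition H01 (psi psi1 : R -> R) : Prop :=
  L2 psi1 /\ primitive psi psi1 /\ psi 1 = 0.

Definition H02 (psi psi1 psi2 : R -> R) : Prop :=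
  L2 psi2 /\ primitive psi1 psi2 /\ primitive psi psi1 /\
  psi 1 = 0 /\ psi1 1 = 0.

Definition sqint (f : R -> R) : R := Rintegral leb I11 (fun x => f x ^+ 2).

Definition Bc2 (g rho : R) : R :=
  sup [set r | exists psi psi1, H01 psi psi1 /\
     (exists x, -1 <= x <= 1 /\ psi x != 0) /\
     r = g * rho * psi 0 ^+ 2 / sqint psi1].

Definition Bc (g rho : R) : R := Num.sqrt (Bc2 g rho).

Definition xivc2 (g rho B : R) : R :=
  inf [set r | exists psi psi1 psi2, H02 psi psi1 psi2 /\
     0 < g * rho * psi 0 ^+ 2 - `|B| ^+ 2 * sqint psi1 /\
     r = `|B| ^+ 2 * sqint psi2 / (g * rho * psi 0 ^+ 2 - `|B| ^+ 2 * sqint psi1)].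

Definition xivc (g rho B : R) : R := Num.sqrt (xivc2 g rho B).

Definition E0 (g rho B xi : R) (psi psi1 psi2 : R -> R) : R :=
  2^-1 * Rintegral leb I11
     (fun x => `|B| ^+ 2 * (psi1 x ^+ 2 + psi2 x ^+ 2 / xi ^+ 2))
  - 2^-1 * g * rho * psi 0 ^+ 2.

End Defs.

(* Main.v *)
Require Import Defs.
From HB Require Import structures.
From mathcomp Require Import all_boot all_order all_algebra.
From mathcomp Require Import all_classical all_reals all_analysis.
From mathcomp Require Import lra ring.
Import Order.TTheory GRing.Theory Num.Theory.
Import numFieldNormedType.Exports.
Local Open Scope classical_set_scope.
Local Open Scope ring_scope.

Section Aux.
Variable R : realType.
Notation mu := (@lebesgue_measure R).
Notation mR := (measurableTypeR R).

Lemma icst11 (k : R) : mu.-integrable (`[-1, 1] : set mR) (EFin \o cst k).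
Proof.
apply: continuous_compact_integrable; first exact: segment_compact.
apply: continuous_subspaceT => x; exact: cst_continuous.
Qed.

Lemma icstS (D : set mR) (k : R) : measurable D -> D `<=` `[-1, 1] ->
  mu.-integrable D (EFin \o cst k).
Proof. move=> mD DI; apply: integrableS (icst11 k) => //. Qed.

Lemma mu01 : mu (`]0, 1] : set mR) = 1%:E.
Proof. by rewrite lebesgue_measure_itv /= lte01 oppr0 adde0. Qed.
Lemma muN10 : mu (`[-1, 0] : set mR) = 1%:E.
Proof. by rewrite lebesgue_measure_itv /= lte_fin ltrN10 opprK add0r. Qed.

Lemma iZ (D : set (measurableTypeR R)) (k : R) (f : R -> R) : measurable D -> mu.-integrable D (EFin \o f) ->
  mu.-integrable D (EFin \o (fun x => k * f x)).
Proof. move=> mD If; have := integrableZl mD k If; apply: eq_integrable => // x _ /=; by rewrite EFinM. Qed.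

Lemma iD (D : set (measurableTypeR R)) (f g : R -> R) : measurable D -> mu.-integrable D (EFin \o f) ->
  mu.-integrable D (EFin \o g) -> mu.-integrable D (EFin \o (fun x => f x + g x)).
Proof. move=> mD If Ig; have := integrableD mD If Ig; apply: eq_integrable => // x _ /=; by rewrite EFinD. Qed.

Lemma cs_le (D : set (measurableTypeR R)) (f : R -> R) : measurable D -> mu D = 1%:E ->
  (forall k, mu.-integrable D (EFin \o cst k)) ->
  mu.-integrable D (EFin \o f) -> mu.-integrable D (EFin \o (fun x => f x ^+ 2)) ->
  (\int[mu]_(x in D) f x) ^+ 2 <= \int[mu]_(x in D) (f x ^+ 2).
Proof.
move=> mD D1 icst If If2.
set a := Rintegral mu D f; set S := Rintegral mu D (fun x => f x ^+ 2).
have : \int[mu]_(x in D) (a * f x) <= \int[mu]_(x in D) (2^-1 * (a^+2 + f x ^+ 2)).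
  apply: le_Rintegral => //; [exact: iZ|apply: iZ => //; exact: iD (icst _) If2|].
  move=> x _; have := sqr_ge0 (a - f x); lra.
rewrite RintegralZl // RintegralZl //; last exact: iD (icst _) If2.
rewrite (RintegralD mD (icst (a ^+ 2)) If2).
rewrite Rintegral_cst //.
have -> : fine (lebesgue_measure_lebesgue_measure__canonical__measure_function_Measure R D) = 1 by move: D1 => /= ->.
rewrite mulr1 -/a -/S.
lra.
Qed.

Lemma half_bound (psi psi1 : R -> R) : primitive psi psi1 -> psi 1 = 0 -> L2 psi1 ->
  2 * psi 0 ^+ 2 <= sqint psi1.
Proof.
move=> [Ip Pp] p1 [_ I2].
have P0 := Pp 0 ltac:(lra).
have P1 := Pp 1 ltac:(lra).
have I2' : mu.-integrable (`[-1, 1] : set mR) (EFin \o (fun x => psi1 x ^+ 2)) by [].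
have Ip' : mu.-integrable (`[-1, 1] : set mR) (EFin \o psi1) by [].
have h1 := Rintegral_itvB (x:=0) Ip' ltac:(by rewrite bnd_simp; lra) ltac:(by rewrite bnd_simp; lra).
have h2 := Rintegral_itvB (x:=0) I2' ltac:(by rewrite bnd_simp; lra) ltac:(by rewrite bnd_simp; lra).
rewrite -P0 -P1 p1 sub0r in h1.
match type of P0 with _ = Rintegral _ ?D _ =>
have c1 := @cs_le D psi1 ltac:(exact: measurable_itv) muN10
  ltac:(move=> k; apply: icstS => //; apply: subset_itvl; rewrite bnd_simp; lra)
  ltac:(apply: integrableS Ip' => //; apply: subset_itvl; rewrite bnd_simp; lra)
  ltac:(apply: integrableS I2' => //; apply: subset_itvl; rewrite bnd_simp; lra) end.
match type of h1 with _ = Rintegral _ ?D _ =>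
have c2 := @cs_le D psi1 ltac:(exact: measurable_itv) mu01
  ltac:(move=> k; apply: icstS => //; apply: subset_itvr; rewrite bnd_simp; lra)
  ltac:(apply: integrableS Ip' => //; apply: subset_itvr; rewrite bnd_simp; lra)
  ltac:(apply: integrableS I2' => //; apply: subset_itvr; rewrite bnd_simp; lra) end.
rewrite -P0 in c1; rewrite -h1 sqrrN in c2.
rewrite /sqint /I11; lra.
Qed.

Lemma prim_cont (f df : R -> R) : primitive f df ->
  exists G : R -> R, {within `[-1, 1], continuous G} /\ {in `[-1, 1], G =1 f}.
Proof.
move=> [Idf Pf].
exists (parameterized_integral mu (-1) ^~ df); split.
  apply: parameterized_integral_continuous => //; lra.
move=> x; rewrite in_itv /= => /andP[x1 x2].
rewrite Pf //; lra.
Qed.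

Lemma cont_L2 (G : R -> R) : {within `[-1, 1], continuous G} -> L2 G.
Proof.
move=> cG; split.
  apply: measurable_realfun.subspace_continuous_measurable_fun => //; exact: measurable_itv.
have : {within `[-1, 1], continuous (fun x => G x ^+ 2)}.
  move=> x; exact: (continuous_comp (cG x) (@exprn_continuous R 2 (G x))).
move/continuous_compact_integrable => H; apply: H; exact: segment_compact.
Qed.

Lemma L2_eq (f g : R -> R) : {in `[-1, 1], f =1 g} -> L2 f -> L2 g.
Proof.
move=> fg [mf If]; split.
  move: mf; rewrite /I11; apply: eq_measurable_fun => x xI; apply: fg; move: xI; by rewrite !inE.
move: If; rewrite /I11; apply: eq_integrable; first exact: measurable_itv.
move=> x xI /=; rewrite fg //; move: xI; by rewrite !inE.
Qed.

Lemma H02_L2 (psi psi1 psi2 : R -> R) : H02 psi psi1 psi2 -> L2 psi1.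
Proof.
move=> [_ [P1 _]]; have [G [cG GE]] := prim_cont _ _ P1.
exact: L2_eq _ _ GE (cont_L2 _ cG).
Qed.

Lemma H02_H01 (psi psi1 psi2 : R -> R) : H02 psi psi1 psi2 -> H01 psi psi1.
Proof. move=> H; have := H02_L2 _ _ _ H; case: H => [_ [_ [Pp [p1 _]]]]; by split. Qed.

Lemma int_lin (a b : R) (u v : R -> R) :
  mu.-integrable (`[-1, 1] : set mR) (EFin \o u) ->
  mu.-integrable (`[-1, 1] : set mR) (EFin \o v) ->
  Rintegral mu (@I11 R) (fun x => a * u x + b * v x) =
  a * Rintegral mu (@I11 R) u + b * Rintegral mu (@I11 R) v.
Proof.
move=> Iu Iv; have m : measurable (`[-1, 1] : set mR) by exact: measurable_itv.
rewrite /I11 RintegralD //; try (apply: iZ => //).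
by rewrite !RintegralZl.
Qed.

Lemma E0E (g rho B xi : R) (psi psi1 psi2 : R -> R) : H02 psi psi1 psi2 ->
  E0 g rho B xi psi psi1 psi2 =
  2^-1 * (`|B| ^+ 2 * sqint psi1 + (`|B| ^+ 2 / xi ^+ 2) * sqint psi2) - 2^-1 * g * rho * psi 0 ^+ 2.
Proof.
move=> H; have [_ I1] := H02_L2 _ _ _ H; case: H => [[_ I2] _].
rewrite /E0 /sqint -int_lin //.
congr (_ * _ - _); apply: eq_Rintegral => x _; ring.
Qed.

Lemma E1E (g rho B xi : R) (psi psi1 psi2 : R -> R) : H02 psi psi1 psi2 ->
  Rintegral (@lebesgue_measure R) (@I11 R)
         (fun x => (`|B| ^+ 2 - Bc2 g rho) * psi1 x ^+ 2
                   + `|B| ^+ 2 * psi2 x ^+ 2 / xi ^+ 2) =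
  (`|B| ^+ 2 - Bc2 g rho) * sqint psi1 + (`|B| ^+ 2 / xi ^+ 2) * sqint psi2.
Proof.
move=> H; have [_ I1] := H02_L2 _ _ _ H; case: H => [[_ I2] _].
rewrite /sqint -int_lin //.
apply: eq_Rintegral => x _; ring.
Qed.

Definition EB (g rho : R) := [set r | exists psi psi1, H01 psi psi1 /\
     (exists x, -1 <= x <= 1 /\ psi x != 0) /\
     r = g * rho * psi 0 ^+ 2 / sqint psi1].

Lemma sqint_ge0 (f : R -> R) : 0 <= sqint f.
Proof. apply: Rintegral_ge0 => x _; exact: sqr_ge0. Qed.

Lemma EB_ub (g rho r : R) : 0 < g -> 0 < rho -> EB g rho r -> 0 <= r <= g * rho / 2.
Proof.
move=> g0 r0 [psi [psi1 [[L [P p1]] [_ ->]]]].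
have hb := half_bound _ _ P p1 L.
have S0 := sqint_ge0 psi1.
have gr : 0 < g * rho by exact: mulr_gt0.
have [->|Sp] := eqVneq (sqint psi1) 0.
  rewrite invr0 mulr0 lexx /=; apply: divr_ge0; lra.
have Sp' : 0 < sqint psi1 by rewrite lt_neqAle eq_sym Sp S0.
apply/andP; split; first by apply: divr_ge0 => //; apply: mulr_ge0; [lra|exact: sqr_ge0].
rewrite ler_pdivrMr //; nra.
Qed.

Lemma Bc2E (g rho : R) : Bc2 g rho = sup (EB g rho).
Proof. by []. Qed.

Lemma Bc2_bounds (g rho : R) : 0 < g -> 0 < rho -> 0 <= Bc2 g rho <= g * rho / 2.
Proof.
move=> g0 r0; rewrite Bc2E.
have gr : 0 < g * rho by exact: mulr_gt0.
have [[r Er]|ne] := pselect (EB g rho !=set0); last first.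
  rewrite sup_out; last by case.
  apply/andP; split => //; apply: divr_ge0; lra.
have hs : has_sup (EB g rho).
  split; first by exists r. exists (g * rho / 2) => y Ey; by case/andP: (EB_ub _ _ _ g0 r0 Ey).
apply/andP; split.
  case/andP: (EB_ub _ _ _ g0 r0 Er) => r0' _; apply: le_trans r0' _; exact: sup_upper_bound.
apply: ge_sup; first by exists r.
move=> y Ey; by case/andP: (EB_ub _ _ _ g0 r0 Ey).
Qed.

Lemma EB_le (g rho r : R) : 0 < g -> 0 < rho -> EB g rho r -> r <= Bc2 g rho.
Proof.
move=> g0 r0 Er; rewrite Bc2E; apply: sup_upper_bound => //.
split; first by exists r. exists (g * rho / 2) => y Ey; by case/andP: (EB_ub _ _ _ g0 r0 Ey).
Qed.

Lemma Bc2_ratio (g rho : R) (psi psi1 : R -> R) : 0 < g -> 0 < rho -> H01 psi psi1 ->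
  g * rho * psi 0 ^+ 2 <= Bc2 g rho * sqint psi1.
Proof.
move=> g0 r0 H.
have [B0 _] := andP (Bc2_bounds _ _ g0 r0).
have S0 := sqint_ge0 psi1.
have [->|p0] := eqVneq (psi 0) 0.
  by rewrite expr0n /= mulr0 mulr_ge0.
case: (H) => [L [P p1]].
have hb := half_bound _ _ P p1 L.
have q : 0 < psi 0 ^+ 2 by rewrite exprn_even_gt0.
have Sp : 0 < sqint psi1 by lra.
have Er : EB g rho (g * rho * psi 0 ^+ 2 / sqint psi1).
  exists psi, psi1; split => //; split => //; exists 0; split => //; lra.
have := EB_le _ _ _ g0 r0 Er; rewrite ler_pdivrMr //.
Qed.

Definition EX (g rho B : R) := [set r | exists psi psi1 psi2, H02 psi psi1 psi2 /\
     0 < g * rho * psi 0 ^+ 2 - `|B| ^+ 2 * sqint psi1 /\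
     r = `|B| ^+ 2 * sqint psi2 / (g * rho * psi 0 ^+ 2 - `|B| ^+ 2 * sqint psi1)].

Lemma xivc2E (g rho B : R) : xivc2 g rho B = inf (EX g rho B).
Proof. by []. Qed.

Lemma EX_ge0 (g rho B r : R) : EX g rho B r -> 0 <= r.
Proof.
move=> [psi [psi1 [psi2 [_ [D0 ->]]]]].
apply: divr_ge0; last exact: ltW.
apply: mulr_ge0; [exact: sqr_ge0|exact: sqint_ge0].
Qed.

Lemma xivc2_ge0 (g rho B : R) : 0 <= xivc2 g rho B.
Proof.
rewrite xivc2E.
have [[r Er]|ne] := pselect (EX g rho B !=set0); last first.
  by rewrite inf_out //; case.
apply: lb_le_inf; first by exists r.
move=> y Ey; exact: EX_ge0 Ey.
Qed.

Lemma EX_le (g rho B r : R) : EX g rho B r -> xivc2 g rho B <= r.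
Proof.
move=> Er; rewrite xivc2E; apply: ge_inf => //.
exists 0 => y Ey; exact: EX_ge0 Ey.
Qed.

Lemma der_cont (f : R -> R) : (forall x : R, derivable f x 1) -> continuous f.
Proof. move=> df x; apply: differentiable_continuous; exact/derivable1_diffP. Qed.

Lemma prim_of (F f : R -> R) : (forall x : R, is_derive x 1 F (f x)) ->
  (forall x : R, derivable f x 1) -> F (-1) = 0 -> primitive F f.
Proof.
move=> dF df F0.
have cf := der_cont _ df.
have cF : continuous F by apply: der_cont => x; case: (dF x).
split.
  apply: continuous_compact_integrable; first exact: segment_compact.
  exact: continuous_subspaceT.
move=> x /andP[x1 x2].
have [<-|x1'] := eqVneq (-1) x.
  by rewrite set_itv1 Rintegral_set1.
have lt : -1 < x by rewrite lt_neqAle x1' x1.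
have := @continuous_FTC2 R f F (-1) x lt (continuous_subspaceT cf).
rewrite /Rintegral => ->.
- by rewrite F0 sube0.
- split.
  + move=> y _; by case: (dF y).
  + exact: cvg_at_right_filter (cF _).
  + exact: cvg_at_left_filter (cF _).
- move=> y _; rewrite derive1E; exact: derive_val.
Qed.

Section Cons.
Variables (e : R) (n : nat).
Hypothesis e0 : 0 < e.

Definition uu : R -> R := (@id R) ^+ 2 + cst (e ^+ 2).
Definition aa : R -> R := Num.sqrt \o uu.
Definition ia : R -> R := fun y => (aa y)^-1.
Definition k0 : R := ia 1.
Definition NN : R := (n.*2.+2)%:R.
Definition cpsi : R -> R := cst (aa 1 - k0 / NN) - aa + cst (k0 / NN) * (@id R) ^+ (n.*2.+2).
Definition cpsi1 : R -> R := - ((@id R) * ia) + cst k0 * (@id R) ^+ (n.*2.+1).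
Definition cpsi2 : R -> R := - (cst (e ^+ 2) * ia ^+ 3) + cst ((n.*2.+1)%:R * k0) * (@id R) ^+ (n.*2).

Lemma uuE x : uu x = x ^+ 2 + e ^+ 2.
Proof. by rewrite /uu !fctE. Qed.

Lemma uu_pos x : 0 < uu x.
Proof. rewrite uuE; have := sqr_ge0 x; have := mulr_gt0 e0 e0; rewrite !expr2; lra. Qed.

Lemma aa_pos x : 0 < aa x.
Proof. by rewrite /aa /= sqrtr_gt0 uu_pos. Qed.

Lemma aa2 x : aa x ^+ 2 = x ^+ 2 + e ^+ 2.
Proof. by rewrite /aa /= sqr_sqrtr ?uuE // ltW // -uuE uu_pos. Qed.

Lemma du (x : R) : is_derive x 1 uu (2 * x).
Proof. rewrite /uu; apply: is_derive_eq. by rewrite addr0 expr1 [_%:A]mulr1. Qed.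

Local Instance da (x : R) : is_derive x 1 aa (x / aa x).
Proof.
have h1 := is_derive1_sqrt (uu_pos x).
have h2 := is_derive1_comp h1 (du x).
apply: is_derive_eq h2 _.
rewrite /aa /=. have : 0 < Num.sqrt (uu x) by rewrite sqrtr_gt0 uu_pos.
move=> h; field; lra.
Qed.

Local Instance dia (x : R) : is_derive x 1 ia (- (aa x) ^- 2 * (x / aa x)).
Proof.
have := is_deriveV (lt0r_neq0 (aa_pos x)) (da x).
move=> h; apply: is_derive_eq h _; by rewrite [_ *: _]/=.
Qed.

Lemma dpsi (x : R) : is_derive x 1 cpsi (cpsi1 x).
Proof.
rewrite /cpsi; apply: is_derive_eq.
rewrite /cpsi1 /k0 /NN !fctE /=.
rewrite scaler0 addr0 sub0r [_%:A]mulr1 -[_ *: _]/(_ * _) /ia.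
have hN : (n.*2.+2)%:R != 0 :> R by rewrite pnatr_eq0.
field; apply/and3P; split; try exact: lt0r_neq0 (aa_pos _).
apply: lt0r_neq0; have := ler0n R n.*2; lra.
Qed.

Lemma dpsi1 (x : R) : is_derive x 1 cpsi1 (cpsi2 x).
Proof.
rewrite /cpsi1; apply: is_derive_eq.
rewrite /cpsi2 /k0 !fctE /=.
rewrite scaler0 addr0 ![_%:A]mulr1 -![_ *: _]/(_ * _) /ia.
have he : e ^+ 2 = aa x ^+ 2 - x ^+ 2 by rewrite aa2; ring.
rewrite he; field; by rewrite !lt0r_neq0 ?aa_pos.
Qed.

Lemma dpsi2 (x : R) : derivable cpsi2 x 1.
Proof. rewrite /cpsi2; exact: ex_derive. Qed.

Lemma aaN x : aa (- x) = aa x.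
Proof. by rewrite /aa /= !uuE sqrrN. Qed.

Lemma m1e : (-1 : R) ^+ (n.*2.+2) = 1.
Proof. by rewrite -signr_odd /= odd_double. Qed.
Lemma m1o : (-1 : R) ^+ (n.*2.+1) = -1.
Proof. by rewrite -signr_odd /= odd_double. Qed.

Lemma cpsiE x : cpsi x = aa 1 - k0 / NN - aa x + k0 / NN * x ^+ (n.*2.+2).
Proof. by rewrite /cpsi !fctE. Qed.
Lemma cpsi1E x : cpsi1 x = - (x * ia x) + k0 * x ^+ (n.*2.+1).
Proof. by rewrite /cpsi1 !fctE. Qed.

Lemma H02c : H02 cpsi cpsi1 cpsi2.
Proof.
split; first exact: cont_L2 (continuous_subspaceT (der_cont _ dpsi2)).
split.
  apply: prim_of; [exact: dpsi1|exact: dpsi2|].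
  by rewrite cpsi1E m1o /k0 /ia aaN; ring.
split.
  apply: prim_of; [exact: dpsi| move=> x; by case: (dpsi1 x)|].
  by rewrite cpsiE m1e aaN; ring.
split; first by rewrite cpsiE expr1n; ring.
by rewrite cpsi1E expr1n /k0; ring.
Qed.

Lemma aa1 : 1 <= aa 1 /\ 0 < k0 <= 1.
Proof.
have A2 := aa2 1; have Ap := aa_pos 1.
have A1 : 1 <= aa 1.
  rewrite /aa /= uuE -[X in X <= _]sqrtr1 ler_sqrt expr1n ?lerDl ?sqr_ge0 //.
  by apply: addr_ge0; [exact: ler01|exact: sqr_ge0].
split => //; rewrite /k0 /ia invr_gt0 Ap /= invr_le1 //.
by rewrite unitfE lt0r_neq0.
Qed.

Lemma cpsi0 : 1 - NN^-1 - e <= cpsi 0.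
Proof.
rewrite cpsiE expr0n /= mulr0 addr0.
have A0 := aa2 0; have Ap := aa_pos 0.
have -> : aa 0 = e by rewrite /aa /= uuE expr0n /= add0r sqrtr_sqr gtr0_norm.
have [_ /andP[k0p k1]] := aa1; have [A1 _] := aa1.
have Np : 0 < NN by rewrite /NN ltr0n.
have : k0 / NN <= NN^-1.
  rewrite -[leRHS]mul1r; apply: ler_wpM2r => //; rewrite invr_ge0; exact: ltW.
move=> h; rewrite lerD2r; exact: lerB A1 h.
Qed.

Lemma cpsi1_sq x : -1 <= x <= 1 -> cpsi1 x ^+ 2 <= 1.
Proof.
move=> /andP[x1 x2].
rewrite cpsi1E.
set u := x * ia x; set v := k0 * x ^+ n.*2.+1.
have Ap := aa_pos x; have A2 := aa2 x.
have ip : 0 < ia x by rewrite /ia invr_gt0.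
have uA : u * aa x = x by rewrite /u /ia -mulrA mulVf ?mulr1 // lt0r_neq0.
have u2 : u ^+ 2 <= 1.
  have : u ^+ 2 * aa x ^+ 2 = x ^+ 2 by rewrite -exprMn uA.
  have := mulr_gt0 e0 e0; rewrite !expr2 in A2 * => ? ?; nra.
have [_ /andP[k0p k1]] := aa1.
have xx : 0 <= x ^+ 2 <= 1 by rewrite sqr_ge0 /=; nra.
have v2 : v ^+ 2 <= 1.
  have -> : v ^+ 2 = k0 ^+ 2 * (x ^+ 2) ^+ n.*2.+1 by rewrite /v -exprM mulnC exprM; ring.
  have : (x ^+ 2) ^+ n.*2.+1 <= 1 by case/andP: xx => ? ?; exact: exprn_ile1.
  have : 0 <= (x ^+ 2) ^+ n.*2.+1 by rewrite exprn_ge0 // sqr_ge0.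
  nra.
have uv : 0 <= u * v.
  have -> : u * v = k0 * ia x * x ^+ n.*2.+2 by rewrite /u /v [x ^+ n.*2.+2]exprS; ring.
  apply: mulr_ge0; [apply: mulr_ge0; lra|]; by rewrite exprn_even_ge0 //= odd_double.
have : (u ^+ 2 - u * v) * (v ^+ 2 - u * v) <= 0.
  have -> : (u ^+ 2 - u * v) * (v ^+ 2 - u * v) = - (u * v) * (u - v) ^+ 2 by ring.
  rewrite mulNr oppr_le0; apply: mulr_ge0 => //; exact: sqr_ge0.
nra.
Qed.

Lemma sqint_le2 : sqint cpsi1 <= 2.
Proof.
have [_ I2] := H02_L2 _ _ _ H02c.
rewrite /sqint.
have -> : (2 : R) = Rintegral mu (@I11 R) (fun _ => 1).
  rewrite /I11 Rintegral_cst; last exact: measurable_itv.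
  change (2 = 1 * fine (mu (`[-1, 1] : set mR))).
  rewrite lebesgue_measure_itv /= lte_fin ifT /=; [lra|lra].
apply: le_Rintegral.
- exact: measurable_itv.
- exact: I2.
- exact: icst11.
- move=> x; rewrite /I11 /= in_itv /=; exact: cpsi1_sq.
Qed.

End Cons.

Lemma construct (g rho c : R) : 0 < g -> 0 < rho -> 0 <= c -> c < g * rho / 2 ->
  exists psi psi1 psi2, H02 psi psi1 psi2 /\ 0 < g * rho * psi 0 ^+ 2 - c * sqint psi1.
Proof.
move=> g0 r0 c0 cl.
set G := g * rho.
have Gp : 0 < G by exact: mulr_gt0.
set q := 2 * c / G.
have cq : c * 2 = q * G by rewrite /q; field; exact: lt0r_neq0.
have q0 : 0 <= q by rewrite /q; apply: divr_ge0; lra.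
have cl2 : c * 2 < G by rewrite -ltr_pdivlMr.
have q1 : q < 1 by rewrite /q ltr_pdivrMr //; lra.
set d := (1 - q) / 4.
have d0 : 0 < d by rewrite /d; lra.
have dE : d * 4 = 1 - q by rewrite /d; field.
clearbody d.
have [k hk] := ltr_add_invr (y := 0) (x := d / 2) ltac:(lra).
have e0 : 0 < d / 2 by lra.
exists (cpsi (d / 2) k), (cpsi1 (d / 2) k), (cpsi2 (d / 2) k); split.
  exact: H02c.
have p0 := cpsi0 _ k e0.
have S2 := sqint_le2 _ k e0.
have S0 := sqint_ge0 (cpsi1 (d / 2) k).
have hN : (NN k)^-1 <= k.+1%:R^-1.
  rewrite lef_pV2 ?posrE ?ltr0n // /NN ler_nat ltnS -addnn; apply: leqW; exact: leq_addr.
set p := cpsi (d / 2) k 0 in p0 *.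
set S := sqint (cpsi1 (d / 2) k) in S2 S0 *.
have pd : 1 - d <= p.
  rewrite add0r in hk.
  have h4 : (NN k)^-1 < d / 2 := le_lt_trans hN hk.
  move: p0 h4; generalize (NN k)^-1 => a; generalize p => pp.
  move=> h1 h2; lra.
have pp : (1 - d) ^+ 2 <= p ^+ 2.
  rewrite ler_sqr ?nnegrE; lra.
have cS : c * S <= c * 2 by apply: ler_wpM2l.
have Gp2 : G * (1 - d) ^+ 2 <= G * p ^+ 2 by apply: ler_wpM2l => //; lra.
have : 0 < G * ((1 - d) ^+ 2 - q).
  apply: mulr_gt0 => //. nra.
lra.
Qed.
End Aux.
Arguments half_bound {R}.
Arguments H02_L2 {R}.
Arguments H02_H01 {R}.
Arguments E0E {R}.
Arguments E1E {R}.
Arguments EB_ub {R}.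
Arguments Bc2_bounds {R}.
Arguments EB_le {R}.
Arguments Bc2_ratio {R}.
Arguments sqint_ge0 {R}.
Arguments EX_ge0 {R}.
Arguments xivc2_ge0 {R}.
Arguments EX_le {R}.
Arguments construct {R}.
Arguments EB {R}.
Arguments EX {R}.

Theorem lemma3p3 (R : realType) (g rho B xi : R) :
  0 < g -> 0 < rho -> B != 0 -> xi != 0 ->
  (* (i) *)
  (Bc g rho <= `|B| ->
     forall psi psi1 psi2 : R -> R, H02 psi psi1 psi2 ->
       0 <= E0 g rho B xi psi psi1 psi2 /\
       2^-1 * Rintegral (@lebesgue_measure R) (@I11 R)
         (fun x => (`|B| ^+ 2 - Bc2 g rho) * psi1 x ^+ 2
                   + `|B| ^+ 2 * psi2 x ^+ 2 / xi ^+ 2)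
       <= E0 g rho B xi psi psi1 psi2) /\
  (* (ii) *)
  (`|B| < Bc g rho -> `|xi| <= xivc g rho B ->
     forall psi psi1 psi2 : R -> R, H02 psi psi1 psi2 ->
       0 <= E0 g rho B xi psi psi1 psi2) /\
  (* (iii) *)
  (`|B| < Bc g rho -> xivc g rho B < `|xi| ->
     exists psi psi1 psi2 : R -> R, H02 psi psi1 psi2 /\
       E0 g rho B xi psi psi1 psi2 < 0) /\
  (* (iv) *)
  (forall psi psi1 psi2 : R -> R, H02 psi psi1 psi2 ->
     E0 g rho B xi psi psi1 psi2 < 0 ->
     [/\ `|B| < Bc g rho, xivc g rho B < `|xi| & psi 0 != 0]).
Proof.
move=> g0 r0 B0 xi0.
have gr : 0 < g * rho by exact: mulr_gt0.
have b2p : 0 < `|B| ^+ 2 by rewrite exprn_even_gt0 //= normr_eq0.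
have x2p : 0 < xi ^+ 2 by rewrite exprn_even_gt0.
have [Bc0 Bcub] := andP (Bc2_bounds _ _ g0 r0).
have X0 := xivc2_ge0 g rho B.
have BcE : Bc g rho ^+ 2 = Bc2 g rho by rewrite sqr_sqrtr.
have XE : xivc g rho B ^+ 2 = xivc2 g rho B by rewrite sqr_sqrtr.
have Bcge : 0 <= Bc g rho by exact: sqrtr_ge0.
have Xge : 0 <= xivc g rho B by exact: sqrtr_ge0.
have nB : 0 <= `|B| by [].
have nxi : 0 <= `|xi| by [].
have xiE : `|xi| ^+ 2 = xi ^+ 2 by rewrite real_normK // num_real.
have tE : forall S2, (`|B| ^+ 2 / xi ^+ 2 * S2) * xi ^+ 2 = `|B| ^+ 2 * S2.
  move=> S2; by field.
split.
  move=> hB psi psi1 psi2 H.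
  have b2 : Bc2 g rho <= `|B| ^+ 2 by rewrite -BcE; nra.
  have rat := Bc2_ratio _ _ _ _ g0 r0 (H02_H01 _ _ _ H).
  have S1 := sqint_ge0 psi1; have S2 := sqint_ge0 psi2.
  have t0 : 0 <= `|B| ^+ 2 / xi ^+ 2 * sqint psi2.
    apply: mulr_ge0 => //; apply: divr_ge0; exact: ltW.
  rewrite (E0E _ _ _ _ _ _ _ H) (E1E _ _ _ _ _ _ _ H).
  split; nra.
split.
  move=> hB hxi psi psi1 psi2 H.
  have x2 : xi ^+ 2 <= xivc2 g rho B by rewrite -XE -xiE; nra.
  have S2 := sqint_ge0 psi2.
  have t0 : 0 <= `|B| ^+ 2 / xi ^+ 2 * sqint psi2.
    apply: mulr_ge0 => //; apply: divr_ge0; exact: ltW.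
  rewrite (E0E _ _ _ _ _ _ _ H).
  set D := g * rho * psi 0 ^+ 2 - `|B| ^+ 2 * sqint psi1.
  have [Dp|Dn] := ltP 0 D; last by rewrite /D in Dn; lra.
  have Er : EX g rho B (`|B| ^+ 2 * sqint psi2 / D) by exists psi, psi1, psi2.
  have := EX_le _ _ _ _ Er; rewrite -/D => le1.
  have le2 : xi ^+ 2 * D <= `|B| ^+ 2 * sqint psi2.
    by rewrite -ler_pdivlMr //; apply: le_trans le1.
  have := tE (sqint psi2); rewrite /D in le2; nra.
split.
  move=> hB hxi.
  have b2 : `|B| ^+ 2 < Bc2 g rho by rewrite -BcE; nra.
  have [psi [psi1 [psi2 [H Dp]]]] := construct _ _ _ g0 r0 (ltW b2p) (lt_le_trans b2 Bcub).
  have x2 : xivc2 g rho B < xi ^+ 2 by rewrite -XE -xiE; nra.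
  have [y [psi' [psi1' [psi2' [H' [Dp' ->]]]]] ylt] := inf_lt (ex_intro _ _ (ex_intro _ psi (ex_intro _ psi1 (ex_intro _ psi2 (conj H (conj Dp erefl)))))) x2.
  exists psi', psi1', psi2'; split => //.
  rewrite (E0E _ _ _ _ _ _ _ H').
  set D := g * rho * psi' 0 ^+ 2 - `|B| ^+ 2 * sqint psi1'.
  rewrite -/D in Dp' ylt.
  have le2 : `|B| ^+ 2 * sqint psi2' < xi ^+ 2 * D by rewrite -ltr_pdivrMr.
  have := tE (sqint psi2'); rewrite /D in le2; nra.
move=> psi psi1 psi2 H.
rewrite (E0E _ _ _ _ _ _ _ H) => hE.
have S1 := sqint_ge0 psi1; have S2 := sqint_ge0 psi2.
have t0 : 0 <= `|B| ^+ 2 / xi ^+ 2 * sqint psi2.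
  apply: mulr_ge0 => //; apply: divr_ge0; exact: ltW.
set D := g * rho * psi 0 ^+ 2 - `|B| ^+ 2 * sqint psi1.
have Dp : 0 < D by rewrite /D; nra.
have p0 : psi 0 != 0.
  apply/negP => /eqP p0; move: Dp; rewrite /D p0 expr0n /= mulr0; nra.
have q : 0 < psi 0 ^+ 2 by rewrite exprn_even_gt0.
have [L [P p1]] := H02_H01 _ _ _ H.
have hb := half_bound _ _ P p1 L.
have S1p : 0 < sqint psi1 by lra.
split => //.
- have Er : EB g rho (g * rho * psi 0 ^+ 2 / sqint psi1).
    exists psi, psi1; split; first exact: H02_H01 H.
    split => //; exists 0; split => //; lra.
  have := EB_le _ _ _ g0 r0 Er => le1.
  have lt1 : `|B| ^+ 2 < g * rho * psi 0 ^+ 2 / sqint psi1.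
    by rewrite ltr_pdivlMr //; rewrite /D in Dp; lra.
  have -> : `|B| = Num.sqrt (`|B| ^+ 2) by rewrite sqrtr_sqr normr_id.
  rewrite /Bc ltr_sqrt; last exact: lt_le_trans b2p (le_trans (ltW lt1) le1).
  exact: lt_le_trans lt1 le1.
- have Er : EX g rho B (`|B| ^+ 2 * sqint psi2 / D) by exists psi, psi1, psi2.
  have := EX_le _ _ _ _ Er => le1.
  have lt1 : `|B| ^+ 2 * sqint psi2 / D < xi ^+ 2.
    rewrite ltr_pdivrMr //. have := tE (sqint psi2). rewrite /D in Dp hE *. nra.
  rewrite -(sqrtr_sqr xi) /xivc ltr_sqrt //.
  exact: le_lt_trans le1 lt1.
Qed.
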